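(* Let $w$ be a word over $\Omega$ of length $k$. Then $\{ i \in \{1,\dots,k-1\} : b_i = 1\} = \{ i : [i] = s\} \cup (I \setminus \{s\})$.
   Context: A word of length $k$ is written $w = w_k \dots w_1$. For $1\le i\le k$, $b_i = 1$ if $w_j = w_{k-i+j}$ for all $j=1,\dots,i$, else $b_i=0$. $s = \max\{j \in\{1,\dots,k-1\}: b_j = 1\}$, or $0$ if none. For $1 \le i \le k-1$ with $b_i=1$, $[i] = \max\{ j \in \{1,\dots,k-1\} : b_j=1 \text{ and } i = k - t(k-j) \text{ for some integer } 1 \le t \le \lfloor k/(k-j)\rfloor\}$; $I = \{[i] : 1\le i \le k-1,\ b_i=1\}$. *)

(* Defs.v *)
From mathcomp Require Import all_boot.
Set Implicit Arguments. Unset Strict Implicit. Unset Printing Implicit Defensive.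

(* A word w = w_k ... w_1 of length k over the alphabet T is given by the
   letters w j for 1 <= j <= k (values of w outside {1..k} are never used). *)

Section Borders.
Variables (T : eqType) (w : nat -> T) (k : nat).

Definition bb (i : nat) : bool :=
  all (fun j => w j == w (k - i + j)) (iota 1 i).

(* s = max { j in {1..k-1} : b_j = 1 }, or 0 if none *)
Definition ss : nat := \max_(1 <= j < k | bb j) j.

Definition bracket (i : nat) : nat :=
  \max_(1 <= j < k | bb j &&
          has (fun t => i == k - t * (k - j)) (iota 1 (k %/ (k - j)))) j.

Definition Iset : seq nat := [seq bracket i | i <- iota 1 (k - 1) & bb i].

End Borders.

(* Main.v *)
Require Import Defs.
From mathcomp Require Import all_boot.
From mathcomp Require Import zify.

Lemma max_spec (P : pred nat) a b :
  let m := \max_(a <= j < b | P j) j in (m == 0) || [&& P m, a <= m & m < b].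
Proof.
rewrite /= big_nat_cond.
apply: (big_ind (fun x => (x == 0) || [&& P x, a <= x & x < b])) => //.
- move=> x y Hx Hy; rewrite /maxn; by case: ifP.
- move=> j /andP[/andP[h1 h2] Pj]; apply/orP; right; by rewrite Pj h1 h2.
Qed.

Lemma max_ub (P : pred nat) a b j :
  a <= j < b -> P j -> j <= \max_(a <= j < b | P j) j.
Proof. by move=> h Pj; apply: (leq_bigmax_seq j) => //; rewrite mem_index_iota. Qed.

Definition per {T : eqType} (w : nat -> T) k p :=
  forall j, 1 <= j -> j + p <= k -> w j = w (j + p).

Lemma bb_per (T : eqType) (w : nat -> T) k i :
  i <= k -> bb w k i = true <-> per w k (k - i).
Proof.
move=> hik; rewrite /bb; split.
- move=> /allP H j h1 h2; have := H j; rewrite mem_iota.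
  have -> : 1 <= j < 1 + i by lia.
  move=> /(_ isT)/eqP ->; congr w; lia.
- move=> H; apply/allP => j; rewrite mem_iota => /andP[h1 h2].
  apply/eqP; rewrite H; [congr w; lia | lia | lia].
Qed.

Lemma per_sub (T : eqType) (w : nat -> T) k p q :
  0 < p -> p < q -> p + q <= k -> per w k p -> per w k q -> per w k (q - p).
Proof.
move=> hp hpq hk Pp Pq j h1 h2.
case: (leqP (j + q) k) => hjq.
- rewrite (Pq j h1 hjq).
  have := Pp (j + (q - p)); rewrite (_ : j + (q - p) + p = j + q); last by lia.
  move=> -> //; lia.
- have e1 := Pp (j - p); rewrite (_ : j - p + p = j) in e1; last by lia.
  rewrite -e1; [|lia|lia].
  rewrite (Pq (j - p)); [congr w; lia | lia | lia].
Qed.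

Lemma per_div (T : eqType) (w : nat -> T) k p0 :
  0 < p0 -> per w k p0 ->
  (forall r, 0 < r < k -> per w k r -> p0 <= r) ->
  forall p, 0 < p -> p0 + p <= k -> per w k p -> p0 %| p.
Proof.
move=> hp0 P0 Hmin p; elim: p {-2}p (leqnn p) => [|n IH] p hpn hp hk Pp.
  lia.
have hle : p0 <= p by apply: Hmin => //; lia.
case: (ltngtP p0 p) => hc; last by rewrite hc dvdnn.
- have Pd := @per_sub T w k p0 p hp0 hc hk P0 Pp.
  have H : p0 %| p - p0 by apply: IH => //; try lia; apply: Hmin => //; lia.
  have e : p = p - p0 + p0 by lia.
  by rewrite e dvdn_add ?dvdnn.
- lia.
Qed.

Lemma has_spec (i k p : nat) : 0 < p ->
  has (fun t => i == k - t * p) (iota 1 (k %/ p)) <->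
  exists t, [/\ 1 <= t, t * p <= k & i = k - t * p].
Proof.
move=> hp; split.
- move=> /hasP[t]; rewrite mem_iota => /andP[h1 h2] /eqP e.
  exists t; split => //; rewrite -leq_divRL //; lia.
- move=> [t [h1 h2 e]]; apply/hasP; exists t; last by rewrite e.
  rewrite mem_iota h1 /=; have : t <= k %/ p by rewrite leq_divRL.
  lia.
Qed.

Theorem corollary4p1 (T : eqType) (w : nat -> T) (k : nat) (i : nat) :
  ((1 <= i <= k - 1) && bb w k i) =
  (((1 <= i <= k - 1) && bb w k i && (bracket w k i == ss w k))
   || ((i \in Iset w k) && (i != ss w k))).
Proof.
pose C x j := bb w k j && has (fun t => x == k - t * (k - j)) (iota 1 (k %/ (k - j))).
have Hs : (ss w k == 0) || [&& bb w k (ss w k), 1 <= ss w k & ss w k < k].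
  exact: (max_spec (bb w k) 1 k).
have Hsub : forall j, 1 <= j < k -> bb w k j -> j <= ss w k.
  move=> j hj bj; by apply: max_ub.
have Hbr : forall x, (bracket w k x == 0) ||
   [&& C x (bracket w k x), 1 <= bracket w k x & bracket w k x < k].
  move=> x; exact: (max_spec (C x) 1 k).
have Hbu : forall x j, 1 <= j < k -> C x j -> j <= bracket w k x.
  move=> x j hj cj; by apply: max_ub.
have Hself : forall x, 1 <= x <= k - 1 -> bb w k x -> C x x.
  move=> x hx bx; rewrite /C bx /=; apply/has_spec; first lia.
  exists 1; split; lia.
have L1 : forall x, 1 <= x <= k - 1 -> bb w k x ->
    [&& 1 <= bracket w k x <= k - 1, bb w k (bracket w k x) & x <= bracket w k x].
  move=> x hx bx.
  have hle : x <= bracket w k x by apply: Hbu; [lia | exact: Hself].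
  move: (Hbr x) => /orP[/eqP e|/and3P[/andP[cb _] h1 h2]]; first lia.
  rewrite cb hle andbT; lia.
have L2 : i \in Iset w k -> (1 <= i <= k - 1) && bb w k i.
  rewrite /Iset => /mapP[j]; rewrite mem_filter mem_iota => /andP[bj hj] ->.
  have := L1 j; have hj' : 1 <= j <= k - 1 by lia.
  move=> /(_ hj' bj) /and3P[-> -> _]; done.
have L4 : 1 <= ss w k -> bracket w k (ss w k) = ss w k.
  move=> h1; move: Hs => /orP[/eqP e|/and3P[bs _ hs]]; first lia.
  have hs' : 1 <= ss w k <= k - 1 by lia.
  move: (L1 _ hs' bs) => /and3P[hb bb' hle].
  have := Hsub (bracket w k (ss w k)); rewrite bb'; move=> /(_ _ isT).
  have hb' : 1 <= bracket w k (ss w k) < k by lia.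
  move=> /(_ hb'); lia.
have L3 : 1 <= i <= k - 1 -> bb w k i -> bracket w k i != ss w k -> bracket w k i = i.
  move=> hi bi hne.
  move: (L1 i hi bi) => /and3P[hj bj hij].
  set j := bracket w k i in hne hj bj hij *.
  have cj : C i j.
    move: (Hbr i); rewrite -/j; case/orP => [/eqP e|/and3P[] //]; lia.
  move: cj; rewrite /C => /andP[_ /has_spec] [|t [ht1 ht2 ht3]]; first lia.
  case: (ltngtP i j) => hc; last by rewrite hc.
  2: lia.
  set p := k - j in ht2 ht3.
  have ht : 2 <= t.
    case: t ht1 ht2 ht3 => [|[|t]] //; rewrite mul1n => _ _ e; lia.
  have hu : 2 * p <= t * p by rewrite leq_mul2r ht orbT.
  have hjs : j <= ss w k by apply: Hsub => //; lia.
  move: Hs => /orP[/eqP e|/and3P[bs hs1 hs2]]; first lia.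
  have Pp0 : per w k (k - ss w k) by apply/bb_per => //; lia.
  have Pp : per w k p by apply/bb_per => //; lia.
  have Hmin : forall r, 0 < r < k -> per w k r -> k - ss w k <= r.
    move=> r hr Pr.
    have br : bb w k (k - r).
      apply/bb_per; first lia.
      by rewrite (_ : k - (k - r) = r); last lia.
    have := Hsub (k - r); rewrite br => /(_ _ isT).
    have hr' : 1 <= k - r < k by lia.
    move=> /(_ hr'); lia.
  have hd : (k - ss w k) %| p.
    apply: (@per_div T w k) => //; lia.
  move: hd => /dvdnP[m hm].
  have csj : C i (ss w k).
    rewrite /C bs /=; apply/has_spec; first lia.
    exists (t * m); rewrite -mulnA -hm; split => //.
    case: m hm => [|m] hm; [lia | nia].
  have := Hbu i (ss w k); rewrite -/j => /(_ _ csj).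
  have hs' : 1 <= ss w k < k by lia.
  move=> /(_ hs') hsj.
  have : j <= ss w k by apply: Hsub; [lia | exact: bj].
  move=> h; move: hne; rewrite (_ : j = ss w k) ?eqxx //; lia.
case hB: ((1 <= i <= k - 1) && bb w k i).
- symmetry; move: hB => /andP[hi bi].
  rewrite /=.
  case: eqP => //= hne.
  have e := L3 hi bi (introN eqP hne).
  apply/andP; split.
  + rewrite /Iset; apply/mapP; exists i; last by rewrite e.
    rewrite mem_filter bi mem_iota; lia.
  + apply/eqP => es; apply: hne; by rewrite e es.
- symmetry; rewrite /=; apply/negbTE/negP => /andP[hI _].
  by move: (L2 hI); rewrite hB.
Qed.
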